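(* Let $f=\frac1n\sum_{i=1}^n f_i$ where each $f_i:\mathbb{R}^d\to\mathbb{R}$ is $L$-smooth, and assume moreover that either each $f_i$ is $\mu$-strongly convex for some $\mu>0$, or $\inf_x f(x)>-\infty$. Let the stepsize satisfy $\gamma\le\frac1{Ln}$. Then the iterates of No Full Grad SVRG (described in the context) satisfy, for every epoch $s$, $$f(\omega_{s+1})\le f(\omega_s)-\frac{\gamma n}{2}\|\nabla f(\omega_s)\|^2+\frac{\gamma n}{2}\Big\|\nabla f(\omega_s)-\frac1n\sum_{t=0}^{n-1}v_s^t\Big\|^2.$$
   Context: No Full Grad SVRG: input $x_0^0\in\mathbb{R}^d$, $\omega_0=x_0^0$, $\tilde v_0^0=0$, $v_0=0$, stepsize $\gamma>0$. For epochs $s=0,1,\dots$: choose a permutation $\pi_s^0,\dots,\pi_s^{n-1}$ of the $n$ component indices (by any shuffling rule); for $t=0,\dots,n-1$ set $\tilde v_s^{t+1}=\frac{t}{t+1}\tilde v_s^t+\frac1{t+1}\nabla f_{\pi_s^t}(x_s^t)$, $v_s^t=\nabla f_{\pi_s^t}(x_s^t)-\nabla f_{\pi_s^t}(\omega_s)+v_s$, $x_s^{t+1}=x_s^t-\gamma v_s^t$; then $x_{s+1}^0=x_s^n$, $\omega_{s+1}=x_s^n$, $\tilde v_{s+1}^0=0$, $v_{s+1}=\tilde v_s^n$. *)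

(* Defs.v *)
From HB Require Import structures.
From mathcomp Require Import all_boot all_order all_algebra all_fingroup.
From mathcomp Require Import all_classical all_reals all_analysis.
Set Implicit Arguments. Unset Strict Implicit. Unset Printing Implicit Defensive.
Import Order.TTheory GRing.Theory Num.Theory.
Import numFieldNormedType.Exports.
Local Open Scope ring_scope.

Definition dotv {R : realType} {d : nat} (u v : 'rV[R]_d) : R :=
  \sum_(j < d) u ord0 j * v ord0 j.
Definition enorm {R : realType} {d : nat} (u : 'rV[R]_d) : R :=
  Num.sqrt (dotv u u).

Definition grad {R : realType} {d : nat} (f : 'rV[R]_d -> R^o) (x : 'rV[R]_d)
  : 'rV[R]_d := \row_(j < d) derive f x (delta_mx 0 j).

Definition L_smooth {R : realType} {d : nat} (L : R) (f : 'rV[R]_d -> R^o) :=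
  (forall x, differentiable f x) /\
  (forall x y, enorm (grad f x - grad f y) <= L * enorm (x - y)).

Definition strongly_convex {R : realType} {d : nat} (mu : R) (f : 'rV[R]_d -> R) :=
  forall (x y : 'rV[R]_d) (t : R), 0 <= t <= 1 ->
    f (t *: x + (1 - t) *: y) <=
      t * f x + (1 - t) * f y - mu / 2 * t * (1 - t) * enorm (x - y) ^+ 2.

Definition avgf {R : realType} {d n : nat} (F : 'I_n -> 'rV[R]_d -> R)
  : 'rV[R]_d -> R^o := fun x => n%:R^-1 * \sum_(i < n) F i x.

Section NFG.
Context {R : realType} {d n : nat} (F : 'I_n -> 'rV[R]_d -> R^o)
  (gamma : R) (pi : nat -> {perm 'I_n}) (x00 : 'rV[R]_d).

(* One inner step t (0 <= t < n) of epoch s, given omega_s and v_s: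
   (x_s^t, tilde v_s^t) |-> (x_s^{t+1}, tilde v_s^{t+1}). *)
Definition nfg_inner_step (s : nat) (om v : 'rV[R]_d) (t : nat)
    (st : 'rV[R]_d * 'rV[R]_d) : 'rV[R]_d * 'rV[R]_d :=
  match (insub t : option 'I_n) with
  | Some i =>
      let j := pi s i in
      let x := st.1 in
      (x - gamma *: (grad (F j) x - grad (F j) om + v),
       (t%:R / (t.+1)%:R) *: st.2 + (t.+1)%:R^-1 *: grad (F j) x)
  | None => st
  end.

Fixpoint nfg_inner (s : nat) (om v : 'rV[R]_d) (t : nat) : 'rV[R]_d * 'rV[R]_d :=
  match t with
  | 0 => (om, 0)
  | t'.+1 => nfg_inner_step s om v t' (nfg_inner s om v t')
  end.

(* (omega_s, v_s); omega_0 = x_0^0, v_0 = 0, and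
   omega_{s+1} = x_s^n, v_{s+1} = tilde v_s^n. Note x_s^0 = omega_s for all s. *)
Fixpoint nfg_epoch (s : nat) : 'rV[R]_d * 'rV[R]_d :=
  match s with
  | 0 => (x00, 0)
  | s'.+1 => let: (om, v) := nfg_epoch s' in nfg_inner s' om v n
  end.

Definition nfg_omega (s : nat) : 'rV[R]_d := (nfg_epoch s).1.
Definition nfg_v (s : nat) : 'rV[R]_d := (nfg_epoch s).2.
Definition nfg_x (s t : nat) : 'rV[R]_d :=
  (nfg_inner s (nfg_omega s) (nfg_v s) t).1.

Definition nfg_vst (s : nat) (t : 'I_n) : 'rV[R]_d :=
  grad (F (pi s t)) (nfg_x s t) - grad (F (pi s t)) (nfg_omega s) + nfg_v s.

End NFG.

(* Main.v *)
Require Import Defs.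
From HB Require Import structures.
From mathcomp Require Import all_boot all_order all_algebra all_fingroup.
From mathcomp Require Import all_classical all_reals all_analysis.
Import Order.TTheory GRing.Theory Num.Theory.
Import numFieldNormedType.Exports.
From mathcomp Require Import ring lra.
Local Open Scope classical_set_scope.
Local Open Scope ring_scope.


Section Dot.
Context {R : realType} {d : nat}.
Implicit Types u v w : 'rV[R]_d.

Lemma dotvC u v : dotv u v = dotv v u.
Proof. by apply: eq_bigr => j _; rewrite mulrC. Qed.
Lemma dotvDl u v w : dotv (u + v) w = dotv u w + dotv v w.
Proof. by rewrite /dotv -big_split; apply: eq_bigr => j _; rewrite !mxE mulrDl. Qed.
Lemma dotvZl (k : R) u w : dotv (k *: u) w = k * dotv u w.
Proof. by rewrite /dotv mulr_sumr; apply: eq_bigr => j _; rewrite !mxE mulrA. Qed.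
Lemma dotvNl u w : dotv (- u) w = - dotv u w.
Proof. by rewrite -scaleN1r dotvZl mulN1r. Qed.
Lemma dotvBl u v w : dotv (u - v) w = dotv u w - dotv v w.
Proof. by rewrite dotvDl dotvNl. Qed.
Lemma dotvDr u v w : dotv w (u + v) = dotv w u + dotv w v.
Proof. by rewrite dotvC dotvDl !(dotvC w). Qed.
Lemma dotvZr (k : R) u w : dotv w (k *: u) = k * dotv w u.
Proof. by rewrite dotvC dotvZl dotvC. Qed.
Lemma dotvNr u w : dotv w (- u) = - dotv w u.
Proof. by rewrite dotvC dotvNl dotvC. Qed.
Lemma dotvBr u v w : dotv w (u - v) = dotv w u - dotv w v.
Proof. by rewrite dotvDr dotvNr. Qed.
Lemma dotvv_ge0 u : 0 <= dotv u u.
Proof. by apply: sumr_ge0 => j _; rewrite -expr2 sqr_ge0. Qed.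
Lemma enorm_sq u : enorm u ^+ 2 = dotv u u.
Proof. by rewrite /enorm sqr_sqrtr // dotvv_ge0. Qed.
Lemma enorm_ge0 u : 0 <= enorm u.
Proof. exact: sqrtr_ge0. Qed.
Lemma dotv_sumr (I : finType) (f : I -> 'rV[R]_d) w :
  dotv (\sum_i f i) w = \sum_i dotv (f i) w.
Proof.
rewrite /dotv exchange_big /=; apply: eq_bigr => j _.
by rewrite summxE mulr_suml.
Qed.

Lemma cs_bound u h (c : R) : 0 < c -> dotv u u <= c ^+ 2 * dotv h h ->
  dotv u h <= c * dotv h h.
Proof.
move=> c0 H.
have q := dotvv_ge0 (c^-1 *: u - h).
rewrite !(dotvBl, dotvBr, dotvZl, dotvZr) (dotvC h u) in q.
have c1 : c^-1 ^+ 2 * dotv u u <= dotv h h.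
  rewrite -(ler_pM2l (exprn_gt0 2 c0)) mulrA -exprMn mulrV ?unitfE ?gt_eqF //.
  by rewrite expr1n mul1r.
have : 2 * c^-1 * dotv u h <= 2 * dotv h h.
  set A := dotv u u in q c1 *; set B := dotv h h in q c1 *; set C := dotv u h in q *.
  rewrite expr2 in c1; nra.
rewrite -mulrA ler_pM2l // => H2.
have ci : 0 < c^-1 by rewrite invr_gt0.
by rewrite -(ler_pM2l ci) mulrA mulVf ?gt_eqF // mul1r.
Qed.
End Dot.


Section Desc.
Context {R : realType} {d : nat}.

Lemma grad_dot (f : 'rV[R]_d -> R^o) x h : differentiable f x ->
  'D_h f x = dotv (grad f x) h.
Proof.
move=> df; rewrite deriveE // {1}(row_sum_delta h) linear_sum.
apply: eq_bigr => j _; rewrite linearZ /= mxE deriveE //.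
by rewrite mulrC.
Qed.

Lemma line_derive (f : 'rV[R]_d -> R^o) x h (t : R) :
  derivable f (x + t *: h) h ->
  is_derive t 1 (fun s : R => f (x + s *: h)) ('D_h f (x + t *: h)).
Proof.
move=> df.
have E : (fun e : R => e^-1 *: (((fun s : R => f (x + s *: h)) \o shift t) (e *: 1)
     - f (x + t *: h))) =
   (fun e : R => e^-1 *: ((f \o shift (x + t *: h)) (e *: h) - f (x + t *: h))).
  rewrite funeqE => e /=.
  by rewrite [e%:A]mulr1 scalerDl addrCA.
by split; [rewrite /derivable E | rewrite /derive E].
Qed.
End Desc.


Section Desc.
Context {R : realType} {d : nat}.

Lemma D1 (a s : R) : is_derive s 1 (fun s : R => a * s) a.
Proof.
have -> : (fun s : R => a * s) = a \*: (@id R) by rewrite funeqE.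
have H := (is_deriveZ a (is_derive_id s 1)). apply: (is_derive_eq H).
by rewrite [a *: 1]mulr1.
Qed.

Lemma D2 (b s : R) : is_derive s 1 (fun s : R => b * (s * s)) (b * (2 * s)).
Proof.
have -> : (fun s : R => b * (s * s)) = b \*: ((@id R) * (@id R)) by rewrite funeqE.
have H := is_deriveZ b (is_deriveM (is_derive_id s 1) (is_derive_id s 1)).
apply: (is_derive_eq H).
by rewrite /= [s *: 1]mulr1; congr (_ * _); rewrite -mulr2n mulr_natl.
Qed.

Lemma descent (f : 'rV[R]_d -> R^o) (L : R) x h : L_smooth L f -> 0 < L ->
  f (x + h) <= f x + dotv (grad f x) h + L / 2 * dotv h h.
Proof.
case=> df lip L0.
set a := dotv (grad f x) h; set b := L / 2 * dotv h h.
pose psi : R -> R := fun s : R => (f (x + s *: h) : R) - a * s - b * (s * s).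
pose dpsi : R -> R := fun s : R => ('D_h f (x + s *: h) : R) - a - b * (2 * s).
have Dpsi (s : R) : is_derive s 1 psi (dpsi s).
  have -> : psi = (fun s : R => (f (x + s *: h) : R)) - (fun s : R => a * s)
     - (fun s => b * (s*s)) by rewrite funeqE.
  apply: is_deriveB; last exact: D2.
  apply: is_deriveB; last exact: D1.
  by apply: line_derive; exact: diff_derivable.
have cont : {within `[0, 1], continuous psi}.
  by apply: derivable_within_continuous => s _; case: (Dpsi s).
have [c c01 Hc] := MVT ltr01 (fun s _ => Dpsi s) cont.
move: c01; rewrite in_itv /= => /andP [c0 c1].
have Hd : dpsi c <= 0.
  rewrite /dpsi grad_dot // /a -dotvBl.
  have Lc : 0 < L * c by rewrite mulr_gt0.
  have := @cs_bound R d (grad f (x + c *: h) - grad f x) h (L * c) Lc.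
  have -> : b * (2 * c) = L * c * dotv h h.
    by rewrite /b; field.
  move=> H; rewrite subr_le0; apply: H.
  rewrite -enorm_sq.
  have Hl := lip (x + c *: h) x.
  rewrite [x + c *: h - x]addrC addKr in Hl.
  have -> : (L * c) ^+ 2 * dotv h h = (L * enorm (c *: h)) ^+ 2.
    rewrite [RHS]exprMn enorm_sq dotvZl dotvZr exprMn; ring.
  rewrite !expr2.
  by apply: ler_pM => //; apply: enorm_ge0.
have E1 : psi 1 = f (x + h) - a - b by rewrite /psi scale1r !mulr1.
have E0 : psi 0 = f x.
  rewrite /psi scale0r addr0 mul0r !mulr0 !subr0 //.
rewrite E1 E0 subr0 mulr1 in Hc.
have : f (x + h) - a - b - f x <= 0 by rewrite Hc.
lra.
Qed.
End Desc.


Section Avg.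
Context {R : realType} {d n : nat}.

Lemma is_derive_avg (F : 'I_n -> 'rV[R]_d -> R^o) x v :
  (forall i, differentiable (F i) x) ->
  is_derive x v (avgf F) (n%:R^-1 * \sum_i 'D_v (F i) x).
Proof.
move=> dF.
have -> : avgf F = n%:R^-1 \*: (\sum_(i < n) F i).
  by rewrite funeqE => y; rewrite /avgf /= fct_sumE.
apply: is_deriveZ; apply: is_derive_sum => i.
by apply: derivableP; exact: diff_derivable.
Qed.

Lemma grad_avg (F : 'I_n -> 'rV[R]_d -> R^o) x :
  (forall i, differentiable (F i) x) ->
  grad (avgf F) x = n%:R^-1 *: \sum_i grad (F i) x.
Proof.
move=> dF; apply/rowP => j; rewrite !mxE summxE.
rewrite (@derive_val _ _ _ _ _ _ _ (@is_derive_avg F x (delta_mx 0 j) dF)).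
by congr (_ * _); apply: eq_bigr => i _; rewrite mxE.
Qed.

Lemma descent_avg (F : 'I_n -> 'rV[R]_d -> R^o) (L : R) x h : (0 < n)%N ->
  (forall i, L_smooth L (F i)) -> 0 < L ->
  avgf F (x + h) <= avgf F x + dotv (grad (avgf F) x) h + L / 2 * dotv h h.
Proof.
move=> n0 sm L0.
rewrite grad_avg; last by move=> i; case: (sm i) => + _; apply.
rewrite dotvZl dotv_sumr /avgf.
have nI : 0 < n%:R^-1 :> R by rewrite invr_gt0 ltr0n.
apply: le_trans (_ : n%:R^-1 * \sum_i (F i x + dotv (grad (F i) x) h
   + L / 2 * dotv h h) <= _).
  by rewrite ler_pM2l //; apply: ler_sum => i _; apply: descent.
rewrite !big_split /= sumr_const card_ord !mulrDr; apply: lerD => //.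
by rewrite -[X in _ * X <= _]mulr_natl mulrA mulVf ?mul1r // pnatr_eq0 -lt0n.
Qed.
End Avg.


Lemma aux_lin (R : ringType) (V : lmodType R) (a b c : V) (k : R) :
  a - k *: b - k *: c = a - k *: (c + b).
Proof. by rewrite scalerDr opprD addrA addrAC. Qed.

Lemma inner_x (R : realType) (d n : nat) (F : 'I_n -> 'rV[R]_d -> R^o)
  (gamma : R) (pi : nat -> {perm 'I_n}) s om v t : (t <= n)%N ->
  (nfg_inner F gamma pi s om v t).1 = om - gamma *: \sum_(i < n | (i < t)%N)
     (grad (F (pi s i)) (nfg_inner F gamma pi s om v i).1 - grad (F (pi s i)) om + v).
Proof.
elim: t => [_|t IH Ht] /=.
  by rewrite big_pred0 ?scaler0 ?subr0 // => i; rewrite ltn0.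
rewrite /nfg_inner_step; case: insubP => [i it vi|]; last first.
  by move=> /negP[].
subst t.
rewrite [X in X.1]/= [in RHS](bigD1 i); last by rewrite /= ltnSn.
rewrite (eq_bigl (fun k : 'I_n => (k < i)%N)); last first.
  move=> k /=; rewrite ltnS leq_eqVlt -val_eqE /=.
  by case: (ltngtP k i).
rewrite /= {1}(IH (ltnW Ht)).
set S := \sum_(k < n | _) _.
by rewrite aux_lin.
Qed.


Lemma omega_step (R : realType) (d n : nat) (F : 'I_n -> 'rV[R]_d -> R^o)
  (gamma : R) (pi : nat -> {perm 'I_n}) (x00 : 'rV[R]_d) s :
  nfg_omega F gamma pi x00 s.+1 =
  nfg_omega F gamma pi x00 s - gamma *: \sum_(t < n) nfg_vst F gamma pi x00 s t.
Proof.
have -> : nfg_omega F gamma pi x00 s.+1 = (nfg_inner F gamma pi s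
    (nfg_omega F gamma pi x00 s) (nfg_v F gamma pi x00 s) n).1.
  rewrite /nfg_omega /nfg_v [nfg_epoch _ _ _ _ s.+1]/=.
  by case: (nfg_epoch F gamma pi x00 s).
rewrite inner_x; last exact: leqnn.
congr (_ - _ *: _); apply: eq_bigl => i; exact: ltn_ord.
Qed.

Theorem lemma5 (R : realType) (d n : nat) (F : 'I_n -> 'rV[R]_d -> R^o)
  (L gamma : R) (pi : nat -> {perm 'I_n}) (x00 : 'rV[R]_d) :
  (0 < n)%N ->
  (forall i, L_smooth L (F i)) ->
  ((exists mu : R, 0 < mu /\ forall i, strongly_convex mu (F i)) \/
   (exists m : R, forall x, m <= avgf F x)) ->
  0 < gamma -> gamma <= (L * n%:R)^-1 ->
  forall s : nat,
    avgf F (nfg_omega F gamma pi x00 s.+1) <=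
      avgf F (nfg_omega F gamma pi x00 s)
      - gamma * n%:R / 2 * enorm (grad (avgf F) (nfg_omega F gamma pi x00 s)) ^+ 2
      + gamma * n%:R / 2 *
          enorm (grad (avgf F) (nfg_omega F gamma pi x00 s)
                 - n%:R^-1 *: \sum_(t < n) nfg_vst F gamma pi x00 s t) ^+ 2.
Proof.
move=> n0 sm _ g0 gL s.
have nR : 0 < n%:R :> R by rewrite ltr0n.
have L0 : 0 < L.
  rewrite ltNge; apply/negP => L0.
  have : (L * n%:R)^-1 <= 0 by rewrite invr_le0 mulr_le0_ge0 // ltW.
  move=> H; have := le_trans gL H; rewrite leNgt g0 //.
have LnP : 0 < L * n%:R by rewrite mulr_gt0.
have gLn : gamma * (L * n%:R) <= 1.
  by have := ler_wpM2r (ltW LnP) gL; rewrite mulVf ?gt_eqF.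
rewrite omega_step.
set w := nfg_omega F gamma pi x00 s.
set S := \sum_(t < n) _.
set G := grad (avgf F) w.
set g := n%:R^-1 *: S.
have HS : S = n%:R *: g by rewrite /g scalerA mulfV ?scale1r // gt_eqF.
clearbody g.
have D := descent_avg F L w (- (gamma *: S)) n0 sm L0.
rewrite -/G HS in D; rewrite HS.
rewrite !(dotvNr, dotvZr, dotvNl, dotvZl) in D.
rewrite !enorm_sq !(dotvBl, dotvBr) (dotvC g G).
have gg0 := dotvv_ge0 g.
set GG := dotv G G in D *; set Gg := dotv G g in D *; set gg := dotv g g in D gg0 *.
have P : 0 <= (1 - gamma * (L * n%:R)) * (gamma * n%:R * gg).
  apply: mulr_ge0; first by rewrite subr_ge0.
  by apply: mulr_ge0 => //; apply: mulr_ge0; [exact: ltW|exact: ltW].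
apply: le_trans D _.
nra.
Qed.
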